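(* Let $T=\{t_1,\ldots,t_N\}$ be documents, each containing at most $L$ distinct words from a dictionary $\{w_1,\ldots,w_D\}$ ($D\ge2$). For a word $w$ let $\#(w)$ be the number of documents containing $w$. Fix $\epsilon\in(0,1]$ and $p=2\log D$. Consider the mapper that, for every document $t$ and every unordered pair of distinct words $(w_1,w_2)$ in $t$, independently emits $((w_1,w_2)\to1)$ with probability $\min\!\left(1,\frac{p}{\epsilon}\frac{1}{\min(\#(w_1),\#(w_2))}\right)$ (OverlapSampleEmit). Then the expected total number of emitted pairs (shuffle size) is $O(DL\log(D)/\epsilon)$, independently of $N$.
   Context: This sampling scheme is used to estimate the overlap similarity $\frac{\#(x,y)}{\min(\#(x),\#(y))}$, where $\#(x,y)$ is the number of documents containing both $x$ and $y$. $\log$ denotes the natural logarithm. *)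

(* Defs.v *)
From mathcomp Require Import all_boot all_order all_algebra.
From mathcomp Require Import reals exp.
Set Implicit Arguments. Unset Strict Implicit. Unset Printing Implicit Defensive.
Import Order.TTheory GRing.Theory Num.Theory.
Local Open Scope ring_scope.

(* Documents t_1..t_N are modelled as subsets of the dictionary 'I_D
   (the set of distinct words occurring in the document). *)

Definition doc_count (N D : nat) (T : 'I_N -> {set 'I_D}) (w : 'I_D) : nat :=
  #|[set i : 'I_N | w \in T i]|.

(* Candidate emission slots: (document i, ordered pair (w1,w2)).  A slot is an
   actual (unordered, distinct) word pair of document i iff w1 < w2 and both
   words occur in T i. *)
Definition slot (N D : nat) : finType := ('I_N * ('I_D * 'I_D))%type.

Definition valid_slot (N D : nat) (T : 'I_N -> {set 'I_D}) (k : slot N D) : bool :=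
  [&& (k.2.1 < k.2.2)%N, k.2.1 \in T k.1 & k.2.2 \in T k.1].

Definition emit_prob (R : realType) (N D : nat) (T : 'I_N -> {set 'I_D})
    (eps : R) (k : slot N D) : R :=
  if valid_slot T k then
    Num.min 1 ((2 * ln (D%:R)) / eps
               / (minn (doc_count T k.2.1) (doc_count T k.2.2))%:R)
  else 0.

Definition outcome_prob (R : realType) (N D : nat) (T : 'I_N -> {set 'I_D})
    (eps : R) (om : {ffun slot N D -> bool}) : R :=
  \prod_(k : slot N D) (if om k then emit_prob T eps k else 1 - emit_prob T eps k).

Definition expected_shuffle_size (R : realType) (N D : nat)
    (T : 'I_N -> {set 'I_D}) (eps : R) : R :=
  \sum_(om : {ffun slot N D -> bool})
     outcome_prob T eps om * (#|[set k : slot N D | om k]|)%:R.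

(* Main.v *)
Require Import Defs.
From mathcomp Require Import all_boot all_order all_algebra.
From mathcomp Require Import reals exp.
Import Order.TTheory GRing.Theory Num.Theory.
Local Open Scope ring_scope.

Lemma expect_lin (R : realType) (N D : nat) (T : 'I_N -> {set 'I_D}) (eps : R) :
  expected_shuffle_size T eps = \sum_(k : slot N D) emit_prob T eps k.
Proof.
rewrite /expected_shuffle_size.
have cardE (om : {ffun slot N D -> bool}) :
    (#|[set k : slot N D | om k]|)%:R = \sum_(k : slot N D) ((om k)%:R : R).
  rewrite -sum1_card natr_sum big_mkcond /=; apply: eq_bigr => k _.
  by rewrite inE; case: (om k).
under eq_bigr => om _ do rewrite cardE mulr_sumr.
rewrite exchange_big /=; apply: eq_bigr => k _.
set g := fun j (b : bool) => if b then emit_prob T eps j else 1 - emit_prob T eps j.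
transitivity (\sum_(om : {ffun slot N D -> bool})
   \prod_(j : slot N D) (g j (om j) * (if j == k then (om j)%:R else 1))).
  apply: eq_bigr => om _; rewrite big_split /= /outcome_prob; congr (_ * _).
  by rewrite -big_mkcond /= big_pred1_eq.
rewrite -(bigA_distr_bigA (fun j b => g j b * (if j == k then b%:R else 1))) /=.
under eq_bigr => j _ do rewrite big_bool /=.
rewrite (bigD1 k) //= eqxx mulr1 mulr0 addr0 big1 ?mulr1 // => j /negbTE ->.
by rewrite !mulr1 /g addrC subrK.
Qed.

Lemma S1 (R : realType) (N D L : nat) (T : 'I_N -> {set 'I_D}) :
  (forall i : 'I_N, (#|T i| <= L)%N) ->
  \sum_(i : 'I_N) \sum_(a : 'I_D) \sum_(b : 'I_D)
     ((a \in T i)%:R * (b \in T i)%:R / (doc_count T a)%:R : R) <= L%:R * D%:R.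
Proof.
move=> HL.
have cnt (i : 'I_N) : \sum_(b : 'I_D) ((b \in T i)%:R : R) = #|T i|%:R.
  rewrite -sum1_card natr_sum [RHS]big_mkcond /=. apply: eq_bigr => b _.
  by case: (b \in T i).
have cnt2 (a : 'I_D) : \sum_(i : 'I_N) ((a \in T i)%:R : R) = (doc_count T a)%:R.
  rewrite /doc_count -sum1_card natr_sum [RHS]big_mkcond /=; apply: eq_bigr => i _.
  by rewrite inE; case: (a \in T i).
apply: (@le_trans _ _ (\sum_(i : 'I_N) \sum_(a : 'I_D)
     ((a \in T i)%:R * L%:R / (doc_count T a)%:R : R))).
  apply: ler_sum => i _; apply: ler_sum => a _.
  rewrite -!mulr_suml -mulr_sumr cnt.
  apply: ler_wpM2r; first by rewrite invr_ge0 ler0n.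
  by apply: ler_wpM2l; [rewrite ler0n | rewrite ler_nat].
have -> : (D%:R : R) = \sum_(a : 'I_D) 1 by rewrite sumr_const card_ord.
rewrite exchange_big /= mulr_sumr.
apply: ler_sum => a _.
rewrite -!mulr_suml cnt2 mulr1.
case: (posnP (doc_count T a)) => [->|h]; first by rewrite !mul0r ler0n.
by rewrite mulrAC mulfV ?mul1r // pnatr_eq0 -lt0n.

Qed.

Lemma pt (R : realType) (N D : nat) (T : 'I_N -> {set 'I_D}) (eps : R) (k : slot N D) :
  0 <= 2 * ln (D%:R : R) / eps ->
  emit_prob T eps k <=
  2 * ln (D%:R : R) / eps *
   ((k.2.1 \in T k.1)%:R * (k.2.2 \in T k.1)%:R / (doc_count T k.2.1)%:R
    + (k.2.1 \in T k.1)%:R * (k.2.2 \in T k.1)%:R / (doc_count T k.2.2)%:R).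
Proof.
move=> q0; case: k => i [a b] /=.
rewrite /emit_prob /valid_slot /=.
have c0 (w : 'I_D) : (doc_count T w >= 0)%N by [].
case: ifP => [/and3P[_ ha hb] | _].
  rewrite ha hb !mul1r.
  have pa : (0 < doc_count T a)%N by apply/card_gt0P; exists i; rewrite inE.
  have pb : (0 < doc_count T b)%N by apply/card_gt0P; exists i; rewrite inE.
  rewrite ge_min; apply/orP; right.
  rewrite mulrDr.
  case: (leqP (doc_count T a) (doc_count T b)) => h.
    rewrite lerDl.
    by apply: mulr_ge0 => //; rewrite invr_ge0 ler0n.
  rewrite lerDr.
  by apply: mulr_ge0 => //; rewrite invr_ge0 ler0n.
apply: mulr_ge0 => //; apply: addr_ge0; apply: mulr_ge0; rewrite ?mulr_ge0 ?ler0n ?invr_ge0 //.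
Qed.

Lemma slot_sum (R : realType) (N D : nat) (F : slot N D -> R) :
  \sum_(k : slot N D) F k = \sum_(i : 'I_N) \sum_(a : 'I_D) \sum_(b : 'I_D) F (i, (a, b)).
Proof.
transitivity (\sum_(i : 'I_N) \sum_(ab : 'I_D * 'I_D) F (i, ab)).
  by rewrite (pair_bigA _ (fun i ab => F (i, ab))); apply: eq_bigr => -[i ab].
apply: eq_bigr => i _; rewrite (pair_bigA _ (fun a b => F (i, (a, b)))).
by apply: eq_bigr => -[a b].
Qed.

From mathcomp Require Import ring.

Theorem theorem8 (R : realType) :
  exists C : R, 0 < C /\
    forall (N D L : nat) (T : 'I_N -> {set 'I_D}) (eps : R),
      (2 <= D)%N ->
      (forall i : 'I_N, (#|T i| <= L)%N) ->
      0 < eps -> eps <= 1 ->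
      expected_shuffle_size T eps
        <= C * (D%:R * L%:R * ln (D%:R) / eps).
Proof.
exists 4; split => // N D L T eps hD hL e0 e1.
have q0 : 0 <= 2 * ln (D%:R : R) / eps.
  apply: divr_ge0 (ltW e0); apply: mulr_ge0 => //; apply: ln_ge0.
  by rewrite ler1n; apply: leq_trans hD.
rewrite expect_lin.
apply: (@le_trans _ _ (\sum_(k : slot N D) 2 * ln (D%:R : R) / eps *
   ((k.2.1 \in T k.1)%:R * (k.2.2 \in T k.1)%:R / (doc_count T k.2.1)%:R
    + (k.2.1 \in T k.1)%:R * (k.2.2 \in T k.1)%:R / (doc_count T k.2.2)%:R))).
  apply: ler_sum => k _.
exact: (@pt R N D T eps k q0).
rewrite -mulr_sumr big_split /= !slot_sum.
have h1 := @S1 R N D L T hL.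
have h2 : \sum_(i : 'I_N) \sum_(a : 'I_D) \sum_(b : 'I_D)
     ((a \in T i)%:R * (b \in T i)%:R / (doc_count T b)%:R : R) <= L%:R * D%:R.
  apply: le_trans h1; rewrite le_eqVlt; apply/orP; left; apply/eqP.
  apply: eq_bigr => i _; rewrite exchange_big /=.
  by apply: eq_bigr => a _; apply: eq_bigr => b _; rewrite (mulrC (b \in T i)%:R).
apply: le_trans (ler_wpM2l q0 (lerD h1 h2)) _.
rewrite le_eqVlt; apply/orP; left; apply/eqP; ring.
Qed.
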